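(* Let $\mathcal{C}$ be an abelian category and $\mathcal{A}$ the abelian category whose objects are complexes $[A\xrightarrow{}B\xrightarrow{f}C]$ in $\mathcal{C}$ (degrees $-2,-1,0$) with the first map injective and exact at $B$, morphisms being chain maps modulo homotopy. Let $\phi=(\phi_A,\phi_B,\phi_C):[A\to B\xrightarrow{f}C]\to[A'\to B'\xrightarrow{f'}C']$ be a morphism in $\mathcal{A}$ (represented by a chain map). Then: (i) If $[A'\to B'\xrightarrow{f'}C']\neq 0$ in $\mathcal{A}$ and $\mathrm{End}_{\mathcal{C}}(C')$ is a local ring, then $\phi$ is an epimorphism in $\mathcal{A}$ if and only if $\phi_C$ is a split surjection. (ii) $\phi$ is a monomorphism in $\mathcal{A}$ if and only if the induced map $\bar\phi_C: C/\operatorname{Im} f\to C'/\operatorname{Im} f'$ is injective and the canonical injection $A\to B\oplus\operatorname{Ker} f'$, $a\mapsto (a,-\phi_B(a))$ (where $A$ is identified with its image $\operatorname{Ker} f\subset B$), is a split injection.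
   Context: Here $\mathcal{A}$ is the heart of the $t$-structure on $K^b(\mathcal{C})$ with $D^{\leq 0}=\{X: X^i=0,\ i>0\}$ and $D^{\geq 0}=\{X: X^i=0,\ i<-2,\ H^{-2}(X)=H^{-1}(X)=0\}$ (up to homotopy equivalence). Note $-\phi_B(a)\in\operatorname{Ker} f'$ since $f'\phi_B=\phi_C f$. *)

(* Defs.v *)
From HB Require Import structures.
From mathcomp Require Import all_boot ssralg.
Set Implicit Arguments. Unset Strict Implicit. Unset Printing Implicit Defensive.
Import GRing.Theory.
Local Open Scope ring_scope.

Record PreAdd := {
  Ob : Type;
  Hom : Ob -> Ob -> zmodType;
  cmp : forall X Y Z : Ob, Hom Y Z -> Hom X Y -> Hom X Z;
  idm : forall X : Ob, Hom X X;
  cmp_assoc : forall X Y Z W (h : Hom Z W) (g : Hom Y Z) (f : Hom X Y),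
      cmp h (cmp g f) = cmp (cmp h g) f;
  cmp_id_l : forall X Y (f : Hom X Y), cmp (idm Y) f = f;
  cmp_id_r : forall X Y (f : Hom X Y), cmp f (idm X) = f;
  cmp_addl : forall X Y Z (g1 g2 : Hom Y Z) (f : Hom X Y),
      cmp (g1 + g2) f = cmp g1 f + cmp g2 f;
  cmp_addr : forall X Y Z (g : Hom Y Z) (f1 f2 : Hom X Y),
      cmp g (f1 + f2) = cmp g f1 + cmp g f2
}.
Arguments cmp {p X Y Z}.
Arguments idm {p}.

Section Notions.
Variable C : PreAdd.

Definition mono (X Y : Ob C) (f : Hom X Y) : Prop :=
  forall W (g h : Hom W X), cmp f g = cmp f h -> g = h.
Definition epi (X Y : Ob C) (f : Hom X Y) : Prop :=
  forall W (g h : Hom Y W), cmp g f = cmp h f -> g = h.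

Definition is_kernel (X Y K : Ob C) (f : Hom X Y) (k : Hom K X) : Prop :=
  cmp f k = 0 /\
  forall W (g : Hom W X), cmp f g = 0 -> exists! u : Hom W K, cmp k u = g.

Definition is_cokernel (X Y Q : Ob C) (f : Hom X Y) (q : Hom Y Q) : Prop :=
  cmp q f = 0 /\
  forall W (g : Hom Y W), cmp g f = 0 -> exists! u : Hom Q W, cmp u q = g.

Definition is_zero_obj (Z : Ob C) : Prop := idm Z = 0.

Definition is_biprod (X Y P : Ob C) (i1 : Hom X P) (i2 : Hom Y P)
  (p1 : Hom P X) (p2 : Hom P Y) : Prop :=
  [/\ cmp p1 i1 = idm X, cmp p2 i2 = idm Y, cmp p1 i2 = 0,
      cmp p2 i1 = 0 & cmp i1 p1 + cmp i2 p2 = idm P].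

Definition is_unit_End (X : Ob C) (e : Hom X X) : Prop :=
  exists g : Hom X X, cmp e g = idm X /\ cmp g e = idm X.

Definition local_End (X : Ob C) : Prop :=
  idm X <> 0 /\ forall e : Hom X X, is_unit_End e \/ is_unit_End (idm X - e).
End Notions.

Record AbCat := {
  ab_pre :> PreAdd;
  ab_zero : exists Z : Ob ab_pre, is_zero_obj Z;
  ab_biprod : forall X Y : Ob ab_pre, exists P i1 i2 p1 p2,
      @is_biprod ab_pre X Y P i1 i2 p1 p2;
  ab_ker : forall (X Y : Ob ab_pre) (f : Hom X Y), exists K (k : Hom K X), is_kernel f k;
  ab_coker : forall (X Y : Ob ab_pre) (f : Hom X Y), exists Q (q : Hom Y Q), is_cokernel f q;
  ab_mono_ker : forall (X Y : Ob ab_pre) (m : Hom X Y), mono m ->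
      exists Z (g : Hom Y Z), is_kernel g m;
  ab_epi_coker : forall (X Y : Ob ab_pre) (e : Hom X Y), epi e ->
      exists Z (g : Hom Z X), is_cokernel g e
}.

Section Cx.
Variable C : AbCat.

(* objects: A -al-> B -fm-> C in degrees -2,-1,0 with al injective and the
   complex exact at B; for injective al this says exactly that al is a
   kernel of fm *)
Record Cx := {
  cA : Ob C; cB : Ob C; cC : Ob C;
  al : Hom cA cB;
  fm : Hom cB cC;
  cx_ker : is_kernel fm al
}.

Record CMap (X Y : Cx) := {
  mA : Hom (cA X) (cA Y);
  mB : Hom (cB X) (cB Y);
  mC : Hom (cC X) (cC Y);
  sq1 : cmp mB (al X) = cmp (al Y) mA;
  sq2 : cmp mC (fm X) = cmp (fm Y) mB
}.

Definition htpy (X Y : Cx)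
  (a : Hom (cA X) (cA Y)) (b : Hom (cB X) (cB Y)) (c : Hom (cC X) (cC Y))
  (a' : Hom (cA X) (cA Y)) (b' : Hom (cB X) (cB Y)) (c' : Hom (cC X) (cC Y)) : Prop :=
  exists (h1 : Hom (cB X) (cA Y)) (h2 : Hom (cC X) (cB Y)),
    [/\ a - a' = cmp h1 (al X),
        b - b' = cmp (al Y) h1 + cmp h2 (fm X)
      & c - c' = cmp (fm Y) h2].

Definition htpyM (X Y : Cx) (g h : CMap X Y) : Prop :=
  htpy (mA g) (mB g) (mC g) (mA h) (mB h) (mC h).

Definition epiA (X Y : Cx) (phi : CMap X Y) : Prop :=
  forall (Z : Cx) (g h : CMap Y Z),
    htpy (cmp (mA g) (mA phi)) (cmp (mB g) (mB phi)) (cmp (mC g) (mC phi))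
         (cmp (mA h) (mA phi)) (cmp (mB h) (mB phi)) (cmp (mC h) (mC phi)) ->
    htpyM g h.

Definition monoA (X Y : Cx) (phi : CMap X Y) : Prop :=
  forall (Z : Cx) (g h : CMap Z X),
    htpy (cmp (mA phi) (mA g)) (cmp (mB phi) (mB g)) (cmp (mC phi) (mC g))
         (cmp (mA phi) (mA h)) (cmp (mB phi) (mB h)) (cmp (mC phi) (mC h)) ->
    htpyM g h.

Definition zeroA (X : Cx) : Prop :=
  forall Z : Cx, (forall g h : CMap X Z, htpyM g h) /\ (forall g h : CMap Z X, htpyM g h).
End Cx.

(* Main.v *)
Require Import Defs.
From HB Require Import structures.
From mathcomp Require Import all_boot ssralg.
Import GRing.Theory.
Local Open Scope ring_scope.
Set Implicit Arguments. Unset Strict Implicit. Unset Printing Implicit Defensive.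

Section Facts.
Variable C : AbCat.
Local Notation "g ⊚ f" := (cmp g f) (at level 40, left associativity).
Implicit Types (X Y Z W V : Ob C).

Lemma cmpA X Y Z W (h : Hom Z W) (g : Hom Y Z) (f : Hom X Y) : h ⊚ (g ⊚ f) = h ⊚ g ⊚ f.
Proof. exact: cmp_assoc. Qed.

Lemma cmpAr X Y Z T (g : Hom Y Z) (f : Hom X Y) (h : Hom X Z) (x : Hom Z T) :
  g ⊚ f = h -> x ⊚ g ⊚ f = x ⊚ h.
Proof. by move=> H; rewrite -cmpA H. Qed.

Lemma cmp0l X Y Z (f : Hom X Y) : (0 : Hom Y Z) ⊚ f = 0.
Proof.
have H := cmp_addl (0 : Hom Y Z) 0 f; rewrite addr0 in H.
by apply: (addrI (0 ⊚ f)); rewrite -H addr0.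
Qed.

Lemma cmp0r X Y Z (g : Hom Y Z) : g ⊚ (0 : Hom X Y) = 0.
Proof.
have H := cmp_addr g (0 : Hom X Y) 0; rewrite addr0 in H.
by apply: (addrI (g ⊚ 0)); rewrite -H addr0.
Qed.

Lemma cmpNl X Y Z (g : Hom Y Z) (f : Hom X Y) : (- g) ⊚ f = - (g ⊚ f).
Proof. by apply: (addrI (g ⊚ f)); rewrite -cmp_addl !subrr cmp0l. Qed.

Lemma cmpNr X Y Z (g : Hom Y Z) (f : Hom X Y) : g ⊚ (- f) = - (g ⊚ f).
Proof. by apply: (addrI (g ⊚ f)); rewrite -cmp_addr !subrr cmp0r. Qed.

Lemma cmpBl X Y Z (g1 g2 : Hom Y Z) (f : Hom X Y) : (g1 - g2) ⊚ f = g1 ⊚ f - g2 ⊚ f.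
Proof. by rewrite cmp_addl cmpNl. Qed.

Lemma cmpBr X Y Z (g : Hom Y Z) (f1 f2 : Hom X Y) : g ⊚ (f1 - f2) = g ⊚ f1 - g ⊚ f2.
Proof. by rewrite cmp_addr cmpNr. Qed.

Lemma mono0 X Y (m : Hom X Y) : mono m <-> forall W (x : Hom W X), m ⊚ x = 0 -> x = 0.
Proof.
split.
- by move=> Hm W x Hx; apply: Hm; rewrite Hx cmp0r.
- move=> H W g h E; apply/eqP; rewrite -subr_eq0; apply/eqP; apply: H.
  by rewrite cmpBr E subrr.
Qed.

Lemma epi0 X Y (e : Hom X Y) : epi e <-> forall W (x : Hom Y W), x ⊚ e = 0 -> x = 0.
Proof.
split.
- by move=> He W x Hx; apply: He; rewrite Hx cmp0l.
- move=> H W g h E; apply/eqP; rewrite -subr_eq0; apply/eqP; apply: H.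
  by rewrite cmpBl E subrr.
Qed.

Lemma ker_mono X Y K (f : Hom X Y) (k : Hom K X) : is_kernel f k -> mono k.
Proof.
move=> [Hk U] W g h E.
have [u [_ Hu]] := U W (k ⊚ g) (ltac:(by rewrite cmpA Hk cmp0l)).
by rewrite -(Hu g erefl) -(Hu h (esym E)).
Qed.

Lemma coker_epi X Y Q (f : Hom X Y) (q : Hom Y Q) : is_cokernel f q -> epi q.
Proof.
move=> [Hq U] W g h E.
have [u [_ Hu]] := U W (g ⊚ q) (ltac:(by rewrite -cmpA Hq cmp0r)).
by rewrite -(Hu g erefl) -(Hu h (esym E)).
Qed.

Lemma epi_coker_ker X Y K (e : Hom X Y) (n : Hom K X) :
  epi e -> is_kernel e n -> is_cokernel n e.
Proof.
move=> He [Hn Un].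
have [Z [g [Hge Ug]]] := ab_epi_coker He.
split => // W v Hv.
have [g' [Hg' _]] := Un _ g Hge.
have [w [Hw _]] := Ug W v (ltac:(by rewrite -Hg' cmpA Hv cmp0l)).
exists w; split => // w' Hw'; apply: He; by rewrite Hw Hw'.
Qed.

Lemma mono_ker_coker X Y Q (m : Hom X Y) (c : Hom Y Q) :
  mono m -> is_cokernel m c -> is_kernel c m.
Proof.
move=> Hm [Hc Uc].
have [Z [g [Hgm Ug]]] := ab_mono_ker Hm.
split => // W v Hv.
have [g' [Hg' _]] := Uc _ g Hgm.
have [w [Hw _]] := Ug W v (ltac:(by rewrite -Hg' -cmpA Hv cmp0r)).
exists w; split => // w' Hw'; apply: Hm; by rewrite Hw Hw'.
Qed.

Lemma mono_comp X Y Z (m : Hom Y Z) (k : Hom X Y) : mono m -> mono k -> mono (m ⊚ k).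
Proof. by move=> Hm Hk W g h E; apply: Hk; apply: Hm; rewrite !cmpA. Qed.

Lemma image_epi X Y Q I (f : Hom X Y) (q : Hom Y Q) (m : Hom I Y) (e : Hom X I) :
  is_cokernel f q -> is_kernel q m -> m ⊚ e = f -> epi e.
Proof.
move=> Hcq Hkm Hf; have Mm := ker_mono Hkm; case: Hcq => Hq Uq; case: Hkm => Hm Um.
have [R [c Hc]] := ab_coker e; case: Hc => Hce Uc.
have [K' [k' Hk']] := ab_ker c; have Mk' := ker_mono Hk'; case: Hk' => Hck' Uk'.
have [e' [He' _]] := Uk' _ e Hce.
have [Z [g Hg]] := ab_mono_ker (mono_comp Mm Mk'); case: Hg => Hgmk Ug.
have gf0 : g ⊚ f = 0.
  by rewrite -Hf -He' cmpA cmpA -(cmpA g m k') Hgmk cmp0l.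
have [g' [Hg' _]] := Uq _ g gf0.
have gm0 : g ⊚ m = 0 by rewrite -Hg' -cmpA Hm cmp0r.
have [x [Hx _]] := Ug _ m gm0.
have k'x : k' ⊚ x = idm _.
  by apply: Mm; rewrite cmpA Hx cmp_id_r.
have c0 : c = 0 by rewrite -(cmp_id_r c) -k'x cmpA Hck' cmp0l.
apply/epi0 => W z Hz.
have [z' [Hz' _]] := Uc W z Hz.
by rewrite -Hz' c0 cmp0r.
Qed.

Lemma pb_epi X I W (e : Hom X I) (w : Hom W I) : epi e ->
  exists E (p : Hom E W) (y : Hom E X), epi p /\ e ⊚ y = w ⊚ p.
Proof.
move=> He.
have [P [i1 [i2 [p1 [p2 [H11 H22 H12 H21 Hid]]]]]] := ab_biprod X W.
pose h := e ⊚ p1 - w ⊚ p2.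
have hi1 : h ⊚ i1 = e.
  by rewrite /h cmpBl -!cmpA H11 H21 cmp_id_r cmp0r subr0.
have [E [m Hm]] := ab_ker h.
have Eh : epi h.
  apply/epi0 => V z Hz; apply: (proj1 (epi0 e) He).
  by rewrite -hi1 cmpA Hz cmp0l.
have [_ Uh] := epi_coker_ker Eh Hm.
case: Hm => Hhm _.
exists E, (p2 ⊚ m), (p1 ⊚ m); split.
- apply/epi0 => V v Hv.
  have [z [Hz _]] := Uh V (v ⊚ p2) (ltac:(by rewrite -cmpA Hv)).
  have z0 : z = 0.
    apply: (proj1 (epi0 e) He).
    by rewrite -hi1 cmpA Hz -cmpA H21 cmp0r.
  have vp2 : v ⊚ p2 = 0 by rewrite -Hz z0 cmp0l.
  by rewrite -(cmp_id_r v) -H22 cmpA vp2 cmp0l.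
- move: Hhm; rewrite /h cmpBl => /eqP; rewrite subr_eq0 => /eqP.
  by rewrite !cmpA.
Qed.

Lemma lift X Y Q W (f : Hom X Y) (q : Hom Y Q) (x : Hom W Y) :
  is_cokernel f q -> q ⊚ x = 0 ->
  exists E (p : Hom E W) (y : Hom E X), epi p /\ f ⊚ y = x ⊚ p.
Proof.
move=> Hq Hqx.
have [I [m Hm]] := ab_ker q.
have Hm' := Hm; case: Hm' => Hqm Um.
have [e [He _]] := Um _ f (proj1 Hq).
have Ee := image_epi Hq Hm He.
have [w [Hw _]] := Um _ x Hqx.
have [E [p [y [Hp Hy]]]] := pb_epi w Ee.
exists E, p, y; split => //.
by rewrite -He -cmpA Hy cmpA Hw.
Qed.

Lemma zero_obj_map W Z0 (t : Hom W Z0) : is_zero_obj Z0 -> t = 0.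
Proof. by move=> H; rewrite -(cmp_id_l t) H cmp0l. Qed.

Lemma zero_ker Z0 E : is_zero_obj Z0 -> is_kernel (0 : Hom Z0 E) (0 : Hom Z0 Z0).
Proof.
move=> H; split; first by rewrite cmp0l.
move=> W t _; exists 0; split; first by rewrite cmp0r (zero_obj_map t H).
by move=> u' _; rewrite (zero_obj_map u' H).
Qed.
End Facts.

Section CxFacts.
Variable C : AbCat.
Local Notation "g ⊚ f" := (cmp g f) (at level 40, left associativity).

Lemma htpy_c (X Y : Cx C) a b c a' b' c' (h2 : Hom (cC X) (cB Y)) :
  b ⊚ al X = al Y ⊚ a -> c ⊚ fm X = fm Y ⊚ b ->
  b' ⊚ al X = al Y ⊚ a' -> c' ⊚ fm X = fm Y ⊚ b' ->
  c - c' = fm Y ⊚ h2 -> htpy a b c a' b' c'.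
Proof.
move=> s1 s2 s1' s2' Hc.
have [HfaX _] := cx_ker X. have KY := cx_ker Y. have MY := ker_mono KY.
case: KY => _ UY.
have [h1 [Hh1 _]] := UY _ (b - b' - h2 ⊚ fm X)
  (ltac:(by rewrite !cmpBr cmpA -Hc cmpBl -s2 -s2' subrr)).
exists h1, h2; split => //.
- apply: MY. by rewrite cmpBr -s1 -s1' cmpA Hh1 !cmpBl -cmpA HfaX cmp0r subr0.
- by rewrite Hh1 subrK.
Qed.

Lemma comp_sq1 (X Y Z : Cx C) (g : CMap Y Z) (f : CMap X Y) :
  (mB g ⊚ mB f) ⊚ al X = al Z ⊚ (mA g ⊚ mA f).
Proof. by rewrite -cmpA sq1 cmpA sq1 cmpA. Qed.

Lemma comp_sq2 (X Y Z : Cx C) (g : CMap Y Z) (f : CMap X Y) :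
  (mC g ⊚ mC f) ⊚ fm X = fm Z ⊚ (mB g ⊚ mB f).
Proof. by rewrite -cmpA sq2 cmpA sq2 cmpA. Qed.

Lemma comp_sq1' (X Y Z : Cx C) (g : CMap X Y) (f : CMap Z X) :
  (mB g ⊚ mB f) ⊚ al Z = al Y ⊚ (mA g ⊚ mA f).
Proof. exact: comp_sq1. Qed.

Definition zmap (X Y : Cx C) : CMap X Y.
Proof.
refine (@Build_CMap C X Y 0 0 0 _ _); by rewrite cmp0l cmp0r.
Defined.

Lemma zero_split (Y : Cx C) (x : Hom (cC Y) (cB Y)) : fm Y ⊚ x = idm _ -> zeroA Y.
Proof.
move=> Hx Z; split => g h.
- apply: (htpy_c (h2 := (mB g - mB h) ⊚ x)); try exact: sq1; try exact: sq2.
  by rewrite -(cmp_id_r (mC g - mC h)) -Hx cmpA cmpBl !sq2 -cmpBr cmpA.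
- apply: (htpy_c (h2 := x ⊚ (mC g - mC h))); try exact: sq1; try exact: sq2.
  by rewrite cmpA Hx cmp_id_l.
Qed.
End CxFacts.

Unset Implicit Arguments.
Local Notation "g ⊚ f" := (cmp g f) (at level 40, left associativity).

Lemma part1 (C : AbCat) (X Y : Cx C) (phi : CMap X Y) :
  (~ zeroA Y -> local_End (cC Y) ->
     (epiA phi <-> exists s : Hom (cC Y) (cC X), cmp (mC phi) s = idm (cC Y))).
Proof.
move=> nz [_ loc]; split.
- move=> Hepi.
  have [P [i1 [i2 [p1 [p2 [H11 H22 H12 H21 Hid]]]]]] := ab_biprod (cB Y) (cC X).
  pose g := fm Y ⊚ p1 + mC phi ⊚ p2.
  have gi1 : g ⊚ i1 = fm Y.
    by rewrite /g cmp_addl -!cmpA H11 H21 cmp0r addr0 cmp_id_r.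
  have gi2 : g ⊚ i2 = mC phi.
    by rewrite /g cmp_addl -!cmpA H12 H22 cmp0r add0r cmp_id_r.
  have [AZ [aZ KZ]] := ab_ker g.
  have KZ' := KZ; case: KZ' => _ UZ.
  have [dA [HdA _]] := UZ _ (i1 ⊚ al Y)
    (ltac:(by rewrite cmpA gi1; case: (cx_ker Y))).
  pose Z := Build_Cx KZ.
  have s1 : i1 ⊚ al Y = al Z ⊚ dA by rewrite HdA.
  have s2 : idm (cC Y) ⊚ fm Y = fm Z ⊚ i1 by rewrite cmp_id_l gi1.
  pose d := @Build_CMap C Y Z dA i1 (idm _) s1 s2.
  have H := Hepi Z d (zmap Y Z).
  have [k1 [k2 [_ _ Hk]]] : htpyM d (zmap Y Z).
    apply: H. apply: (@htpy_c C X Z _ _ _ _ _ _ i2); try exact: comp_sq1; try exact: comp_sq2.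
    by rewrite /= cmp0l subr0 cmp_id_l gi2.
  move: Hk => /= Hk; rewrite subr0 in Hk.
  case: (loc (fm Y ⊚ (p1 ⊚ k2))) => [[v [Hv _]] | [v [Hv _]]].
  + by exfalso; apply: nz; apply: (zero_split (x := p1 ⊚ k2 ⊚ v)); rewrite cmpA.
  + exists (p2 ⊚ k2 ⊚ v); move: Hv.
    have E : idm (cC Y) - fm Y ⊚ (p1 ⊚ k2) = mC phi ⊚ (p2 ⊚ k2).
      by rewrite {1}Hk /= /g cmp_addl -!cmpA addrC addKr.
    by rewrite E !cmpA.
- move=> [s Hs] Z g h Hh.
  case: Hh => h1 [h2 [_ _ Hc]].
  apply: (htpy_c (h2 := h2 ⊚ s)); try exact: sq1; try exact: sq2.
  by rewrite -(cmp_id_r (mC g - mC h)) -Hs cmpA cmpBl Hc cmpA.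
Qed.

Lemma part2 (C : AbCat) (X Y : Cx C) (phi : CMap X Y) :
  (forall (Q Q' : Ob C) (q : Hom (cC X) Q) (q' : Hom (cC Y) Q') (phibar : Hom Q Q'),
     is_cokernel (fm X) q -> is_cokernel (fm Y) q' ->
     cmp phibar q = cmp q' (mC phi) ->
   forall (K : Ob C) (k : Hom K (cB Y)) (u : Hom (cA X) K),
     is_kernel (fm Y) k -> cmp k u = cmp (mB phi) (al X) ->
   forall (P : Ob C) (i1 : Hom (cB X) P) (i2 : Hom K P) (p1 : Hom P (cB X)) (p2 : Hom P K),
     is_biprod i1 i2 p1 p2 ->
     (monoA phi <->
        (mono phibar /\
         exists r : Hom P (cA X), cmp r (cmp i1 (al X) - cmp i2 u) = idm (cA X)))).
Proof.
move=> Q Q' q q' phibar Hq Hq' Hpb K k u Hk Hu P i1 i2 p1 p2 [H11 H22 H12 H21 Hid].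
pose j := i1 ⊚ al X - i2 ⊚ u.
have p1j : p1 ⊚ j = al X.
  by rewrite /j cmpBr !cmpA H11 H12 cmp_id_l cmp0l subr0.
have p2j : p2 ⊚ j = - u.
  by rewrite /j cmpBr !cmpA H21 H22 cmp_id_l cmp0l sub0r.
have MaX := ker_mono (cx_ker X).
have Mk := ker_mono Hk.
split.
- move=> Hmono; split.
  + apply/mono0 => W g Hg.
    have Eq := coker_epi Hq.
    have [E1 [pp1 [y1 [Hp1 Hy1]]]] := pb_epi g Eq.
    have [E2 [pp2 [y2 [Hp2 Hy2]]]] := lift (x := mC phi ⊚ y1) Hq'
      (ltac:(by rewrite cmpA -Hpb -cmpA Hy1 cmpA Hg cmp0l)).
    have [Z0 HZ0] := ab_zero C.
    pose Z := Build_Cx (zero_ker E2 HZ0).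
    have s1 : (0 : Hom Z0 (cB X)) ⊚ al Z = al X ⊚ 0 by rewrite cmp0l cmp0r.
    have s2 : (y1 ⊚ pp2) ⊚ fm Z = fm X ⊚ 0 by rewrite !cmp0r.
    pose d := @Build_CMap C Z X 0 0 (y1 ⊚ pp2) s1 s2.
    have [k1 [k2 [_ _ Hk2]]] : htpyM d (zmap Z X).
      apply: Hmono; apply: (@htpy_c C Z Y _ _ _ _ _ _ y2);
        try exact: comp_sq1; try exact: comp_sq2.
      by rewrite /= cmp0r subr0 Hy2 cmpA.
    move: Hk2 => /=; rewrite subr0 => Hk2.
    apply: (proj1 (epi0 pp1) Hp1); apply: (proj1 (epi0 pp2) Hp2).
    by rewrite -Hy1 -cmpA Hk2 cmpA (proj1 Hq) cmp0l.
  + have [R [c Hc]] := ab_coker j.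
    have Mj : mono j.
      apply/mono0 => W x Hx; apply: (proj1 (mono0 _) MaX).
      by rewrite -p1j -cmpA Hx cmp0r.
    have Kj := mono_ker_coker Mj Hc.
    have Ec := coker_epi Hc.
    case: Hc => Hcj Uc.
    pose Z := Build_Cx Kj.
    have [dC [HdC _]] := Uc _ (fm X ⊚ p1)
      (ltac:(by rewrite -cmpA p1j; case: (cx_ker X))).
    have [h2 [Hh2 _]] := Uc _ (mB phi ⊚ p1 + k ⊚ p2)
      (ltac:(by rewrite cmp_addl -!cmpA p1j p2j cmpNr Hu subrr)).
    have s1 : p1 ⊚ al Z = al X ⊚ idm _ by rewrite cmp_id_r p1j.
    have s2 : dC ⊚ fm Z = fm X ⊚ p1 by rewrite HdC.
    pose d := @Build_CMap C Z X (idm _) p1 dC s1 s2.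
    have [r [_ [Hr _ _]]] : htpyM d (zmap Z X).
      apply: Hmono; apply: (@htpy_c C Z Y _ _ _ _ _ _ h2);
        try exact: comp_sq1; try exact: comp_sq2.
      rewrite /= cmp0r subr0; apply: Ec.
      rewrite -cmpA HdC -cmpA Hh2 cmp_addr cmpA.
      by rewrite (sq2 phi) !cmpA (proj1 Hk) cmp0l addr0.
    exists r; move: Hr => /=; rewrite subr0 => Hr.
    by rewrite -Hr.
- move=> [Mpb [r Hr]] Z g h Hgh.
  case: Hgh => _ [t [_ _ Ht]].
  pose dC := mC g - mC h.
  have Ht' : mC phi ⊚ dC = fm Y ⊚ t by rewrite /dC cmpBr.
  have qd : q ⊚ dC = 0.
    apply: (proj1 (mono0 _) Mpb).
    by rewrite cmpA Hpb -cmpA Ht' cmpA (proj1 Hq') cmp0l.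
  have [E [p [y [Hp Hy]]]] := lift Hq qd.
  case: (Hk) => _ Uk.
  have H0 : fm Y ⊚ (t ⊚ p - mB phi ⊚ y) = 0.
    by rewrite cmpBr !cmpA -Ht' -(sq2 phi) -!cmpA Hy subrr.
  have [g' [Hg' _]] := Uk _ _ H0.
  pose G := (idm P - j ⊚ r) ⊚ (i1 ⊚ y + i2 ⊚ g').
  have [N [n Hn]] := ab_ker p.
  have [Hpn _] := Hn.
  have [_ Up] := epi_coker_ker Hp Hn.
  have [_ UaX] := cx_ker X.
  have [a' [Ha' _]] := UaX _ (y ⊚ n)
    (ltac:(by rewrite cmpA Hy -cmpA Hpn cmp0r)).
  have g'n : g' ⊚ n = - (u ⊚ a').
    apply: Mk; rewrite cmpA Hg' cmpBl -cmpA Hpn cmp0r sub0r cmpNr.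
    by rewrite -cmpA -Ha' cmpA cmpA Hu.
  have Gn : G ⊚ n = 0.
    have E1 : (i1 ⊚ y + i2 ⊚ g') ⊚ n = j ⊚ a'.
      by rewrite cmp_addl -!cmpA g'n -Ha' cmpNr /j cmpBl !cmpA.
    by rewrite /G -cmpA E1 cmpBl cmp_id_l -!cmpA (cmpA r j) Hr cmp_id_l subrr.
  have [s' [Hs' _]] := Up _ G Gn.
  apply: (@htpy_c C Z X _ _ _ _ _ _ (p1 ⊚ s')); try exact: sq1; try exact: sq2.
  apply: Hp.
  rewrite -!cmpA Hs' /G (cmpA p1) cmpBr cmp_id_r (cmpA p1 j r) p1j (cmpBl p1).
  rewrite (cmpBr (fm X)) !cmpA (proj1 (cx_ker X)) !cmp0l subr0 cmp_addr !cmpA.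
  rewrite (cmpAr _ H11) (cmpAr _ H12) cmp_id_r cmp0r cmp0l addr0 Hy.
  by rewrite /dC cmpBl.
Qed.

Theorem lemma3p1 (C : AbCat) (X Y : Cx C) (phi : CMap X Y) :
  (~ zeroA Y -> local_End (cC Y) ->
     (epiA phi <-> exists s : Hom (cC Y) (cC X), cmp (mC phi) s = idm (cC Y)))
  /\
  (forall (Q Q' : Ob C) (q : Hom (cC X) Q) (q' : Hom (cC Y) Q') (phibar : Hom Q Q'),
     is_cokernel (fm X) q -> is_cokernel (fm Y) q' ->
     cmp phibar q = cmp q' (mC phi) ->
   forall (K : Ob C) (k : Hom K (cB Y)) (u : Hom (cA X) K),
     is_kernel (fm Y) k -> cmp k u = cmp (mB phi) (al X) ->
   forall (P : Ob C) (i1 : Hom (cB X) P) (i2 : Hom K P) (p1 : Hom P (cB X)) (p2 : Hom P K),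
     is_biprod i1 i2 p1 p2 ->
     (monoA phi <->
        (mono phibar /\
         exists r : Hom P (cA X), cmp r (cmp i1 (al X) - cmp i2 u) = idm (cA X)))).
Proof.
split; [exact: part1 | exact: part2].
Qed.
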